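(* Let $n\ge1$, $p\in\,]1,2[$, $k_3>0$, and define $\phi_1,\phi_2:\mathbb{R}^n\to\mathbb{R}^n$ by $$\phi_1(e_1)=k_3e_1+(e_1^\top e_1)^{\frac{1-p}{3p-2}}e_1,$$ $$\phi_2(e_1)=k_3^2e_1+\frac{2k_3(2p-1)}{3p-2}(e_1^\top e_1)^{\frac{1-p}{3p-2}}e_1+\frac{p}{3p-2}(e_1^\top e_1)^{\frac{2(1-p)}{3p-2}}e_1.$$ Let $k_1,k_2>0$ be such that $\mathcal{A}^*=\begin{bmatrix}-k_1&1\\-k_2&0\end{bmatrix}$ is Hurwitz, let $\mathcal{Q}^*\in\mathbb{R}^{2\times2}$ be symmetric positive definite, and let $\mathcal{P}^*\succ0$ be the unique solution of $(\mathcal{A}^* )^\top\mathcal{P}^*+\mathcal{P}^*\mathcal{A}^*=-\mathcal{Q}^*$. Set $\gamma_1=k_3\lambda_{\min}\{\mathcal{Q}^*\}/\lambda_{\max}\{\mathcal{P}^*\}$. Consider the system under measurement noise $\mu\in\mathbb{R}^n$ with $\|\mu\|\le\bar\mu$: $$\dot e_1=-k_1\phi_1(e_1+\mu)+e_2,\qquad \dot e_2=-k_2\phi_2(e_1+\mu).$$ If $\gamma_1\ge\lambda_{\max}\{\mathcal{P}^*\}/\lambda_{\min}\{\mathcal{P}^*\}$, then this system is practically finite-time stable at the origin.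
   Context: $\lambda_{\min}(\cdot),\lambda_{\max}(\cdot)$ denote the minimum and maximum eigenvalues of a symmetric matrix. A system is practically finite-time stable (PFTS) at the origin if its solutions converge in finite time to a bounded neighbourhood of the origin; specifically, this is certified by a positive definite $V$ with $\dot V\le-\lambda_1V-\lambda_2V^\alpha+\eta$ ($\lambda_1,\lambda_2,\eta>0$, $\alpha\in]0,1[$), in which case solutions reach in finite time the set $\{V\le\min\{\frac{\eta}{(1-\theta_0)\lambda_1},(\frac{\eta}{(1-\theta_0)\lambda_2})^{1/\alpha}\}\}$ for any $\theta_0\in]0,1[$. *)

(* Defs.v *)
From mathcomp Require Import all_boot all_order all_algebra.
From mathcomp Require Import all_classical all_reals all_analysis.
From mathcomp Require Import complex.
Set Implicit Arguments. Unset Strict Implicit. Unset Printing Implicit Defensive.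
Import Order.TTheory GRing.Theory Num.Theory.
Local Open Scope ring_scope.

Section Defs.
Variable R : realType.

(* e^T e for a vector e of R^n, represented as a row vector e (so e *m e^T). *)
Definition sqnorm (n : nat) (e : 'rV[R]_n) : R := (e *m e^T) 0 0.

Definition enorm (n : nat) (e : 'rV[R]_n) : R := Num.sqrt (sqnorm e).

Definition state_norm (n : nat) (e1 e2 : 'rV[R]_n) : R :=
  Num.sqrt (sqnorm e1 + sqnorm e2).

Definition expo (p : R) : R := (1 - p) / (3 * p - 2).

Definition phi1 (n : nat) (k3 p : R) (e : 'rV[R]_n) : 'rV[R]_n :=
  k3 *: e + (sqnorm e `^ expo p) *: e.

Definition phi2 (n : nat) (k3 p : R) (e : 'rV[R]_n) : 'rV[R]_n :=
  (k3 ^+ 2) *: e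
  + ((2 * k3 * (2 * p - 1)) / (3 * p - 2) * sqnorm e `^ expo p) *: e
  + (p / (3 * p - 2) * sqnorm e `^ (2 * expo p)) *: e.

(* A^* = [[-k1, 1], [-k2, 0]] *)
Definition Astar (k1 k2 : R) : 'M[R]_2 :=
  \matrix_(i < 2, j < 2)
    (if (i == 0) && (j == 0) then - k1
     else if (i == 0) then 1
     else if (j == 0) then - k2 else 0).

Definition hurwitz (m : nat) (A : 'M[R]_m) : Prop :=
  forall z : R[i], eigenvalue (map_mx (fun x : R => (x%:C)%C) A) z -> complex.Re z < 0.

Definition posdef (m : nat) (M : 'M[R]_m) : Prop :=
  M^T = M /\ forall v : 'rV[R]_m, v != 0 -> 0 < (v *m M *m v^T) 0 0.

Definition is_lambda_min (m : nat) (M : 'M[R]_m) (l : R) : Prop :=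
  eigenvalue M l /\ forall y, eigenvalue M y -> l <= y.
Definition is_lambda_max (m : nat) (M : 'M[R]_m) (l : R) : Prop :=
  eigenvalue M l /\ forall y, eigenvalue M y -> y <= l.

Definition is_solution (n : nat) (k1 k2 k3 p : R) (mu : R -> 'rV[R]_n)
  (e1 e2 : R -> 'rV[R]_n) : Prop :=
  forall t : R, 0 < t -> forall i : 'I_n,
    is_derive t 1 (fun s => e1 s 0 i)
      ((- k1 *: phi1 k3 p (e1 t + mu t) + e2 t) 0 i) /\
    is_derive t 1 (fun s => e2 s 0 i)
      ((- k2 *: phi2 k3 p (e1 t + mu t)) 0 i).

Definition PFTS (n : nat) (k1 k2 k3 p mubar : R) : Prop :=
  exists r : R, 0 < r /\
    forall mu : R -> 'rV[R]_n, (forall t, 0 <= t -> enorm (mu t) <= mubar) ->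
    forall e1 e2 : R -> 'rV[R]_n, is_solution k1 k2 k3 p mu e1 e2 ->
    exists T : R, 0 <= T /\ forall t, T <= t -> state_norm (e1 t) (e2 t) <= r.

End Defs.

(* Main.v *)
Require Import Defs.
From mathcomp Require Import all_boot all_order all_algebra.
From mathcomp Require Import all_classical all_reals all_analysis.
From mathcomp Require Import complex.
Import Order.TTheory GRing.Theory Num.Theory.
Local Open Scope ring_scope.
From mathcomp Require Import ring lra.


Section Helpers.
Context {R : realType}.


Definition v2 (x y : R) : 'rV[R]_2 := \row_(j < 2) (if j == 0 then x else y).

Lemma quad2 (M : 'M[R]_2) x y :
  ((v2 x y) *m M *m (v2 x y)^T) 0 0 =
  x * x * M 0 0 + x * y * (M 0 1 + M 1 0) + y * y * M 1 1.
Proof.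
rewrite !mxE !big_ord_recr big_ord0 /= !mxE !big_ord_recr !big_ord0 /= !mxE /=.
have e0 : widen_ord (m:=2) (leqnSn 1) ord_max = 0 by exact/val_inj.
have e1 : (ord_max : 'I_2) = 1 by exact/val_inj.
rewrite e0 e1; ring.
Qed.

Lemma v2_neq0 x y : (x != 0) || (y != 0) -> v2 x y != 0.
Proof.
move=> /orP[] h; apply/eqP => /matrixP.
  by move=> /(_ 0 0); rewrite !mxE /= => /eqP; rewrite (negbTE h).
by move=> /(_ 0 1); rewrite !mxE /= => /eqP; rewrite (negbTE h).
Qed.

Lemma posdef2 (M : 'M[R]_2) : posdef M ->
  M 1 0 = M 0 1 /\ exists m, 0 < m /\ forall x y,
    m * (x ^+ 2 + y ^+ 2) <= M 0 0 * x ^+ 2 + 2 * M 0 1 * x * y + M 1 1 * y ^+ 2.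
Proof.
move=> [hT hp].
have hs : M 1 0 = M 0 1 by rewrite -{1}hT mxE.
have q (x y : R) : (x != 0) || (y != 0) ->
    0 < M 0 0 * x ^+ 2 + 2 * M 0 1 * x * y + M 1 1 * y ^+ 2.
  move=> h; have := hp _ (v2_neq0 _ _ h); rewrite quad2 hs.
  by congr (0 < _); ring.
have ha : 0 < M 0 0 by have := q 1 0; rewrite oner_eq0 /=; lra.
have hc : 0 < M 1 1 by have := q 0 1; rewrite oner_eq0 orbT; lra.
have hd : 0 < M 0 0 * M 1 1 - M 0 1 ^+ 2.
  have := q (M 0 1) (- M 0 0); rewrite oppr_eq0 (gt_eqF ha) orbT => /(_ isT) h.
  have e : M 0 0 * M 0 1 ^+ 2 + 2 * M 0 1 * M 0 1 * - M 0 0 + M 1 1 * (- M 0 0) ^+ 2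
     = M 0 0 * (M 0 0 * M 1 1 - M 0 1 ^+ 2) by ring.
  rewrite e in h; by rewrite -(pmulr_rgt0 _ ha).
split=> //; exists ((M 0 0 * M 1 1 - M 0 1 ^+ 2) / (M 0 0 + M 1 1)).
split; first by apply: divr_gt0 => //; lra.
move=> x y.
have hac : 0 < M 0 0 + M 1 1 by lra.
rewrite -(ler_pM2l hac) mulrA mulrCA divff ?mulr1 ?gt_eqF //.
rewrite -subr_ge0.
have -> : (M 0 0 + M 1 1) * (M 0 0 * x ^+ 2 + 2 * M 0 1 * x * y + M 1 1 * y ^+ 2) -
  (M 0 0 * M 1 1 - M 0 1 ^+ 2) * (x ^+ 2 + y ^+ 2) =
  (M 0 0 * x + M 0 1 * y) ^+ 2 + (M 0 1 * x + M 1 1 * y) ^+ 2 by ring.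
by rewrite addr_ge0 ?sqr_ge0.
Qed.



Lemma sublin (b eta : R) : 0 < b < 1 -> 0 < eta ->
  exists C, forall s, 0 <= s -> s `^ b <= eta * s + C.
Proof.
move=> /andP[b0 b1] e0.
set L := eta `^ (1 / (b - 1)).
have L0 : 0 < L by rewrite powR_gt0.
exists (L `^ b) => s s0.
have [sL|Ls] := leP s L.
  have := ge0_ler_powR (ltW b0); move=> /(_ s L); rewrite !nnegrE => /(_ s0 (ltW L0) sL).
  by move=> h; apply: (le_trans h); rewrite lerDr mulr_ge0 // ltW.
have sp : 0 < s by apply: lt_trans Ls.
have -> : b = 1 + (b - 1) by ring.
rewrite powRD; last by apply/implyP => _; rewrite gt_eqF.
rewrite powRr1 // .
have hL : L `^ (b - 1) = eta.
  by rewrite /L -powRrM mulrC mulrA mulr1 mulfV ?powRr1 ?ltW // subr_eq0 lt_eqF.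
have hle : s `^ (b - 1) <= eta.
  rewrite -hL.
  have -> : b - 1 = - (1 - b) by ring.
  rewrite !powRN lef_pV2 ?posrE ?powR_gt0 //.
  have := ge0_ler_powR (r:=1 - b) _ ; move=> /(_ _ L s); rewrite !nnegrE.
  by apply; rewrite ?subr_ge0 ?ltW.
rewrite mulrC; apply: le_trans (ler_wpM2r (ltW sp) hle) _.
by rewrite lerDl powR_ge0.
Qed.



Lemma young (a d del : R) : 0 < del -> 2 * a * d <= del * a ^+ 2 + d ^+ 2 / del.
Proof.
move=> dp.
have h : 0 <= (del * a - d) ^+ 2 / del by rewrite divr_ge0 ?sqr_ge0 ?ltW.
have e : (del * a - d) ^+ 2 / del = del * a ^+ 2 + d ^+ 2 / del - 2 * a * d.
  by field; rewrite gt_eqF.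
by rewrite e subr_ge0 in h.
Qed.

Lemma coord_bnd (p11 p12 p22 k1 k2 k3 qm eps x y d1 d2 : R) :
  (forall x y : R, qm * (x ^+ 2 + y ^+ 2) <= (2*k1* p11+2*k2* p12) * x ^+ 2
      + 2 * (k1* p12+k2* p22-p11) * x * y + (-2* p12) * y ^+ 2) ->
  0 < k3 -> 0 < eps ->
  2*(p11*x+p12*y)*(k3*(-k1*x+y)+d1) + 2*(p12*x+p22*y)*(-(k3*k2*x)+d2)
  <= -(k3*qm - eps)*(x^+2+y^+2)
     + ((p11^+2+2* p12^+2+p22^+2+1)/eps)*(d1^+2+d2^+2).
Proof.
move=> hQ k3p ep.
set L1 := p11^+2+2* p12^+2+p22^+2+1.
have L1p : 0 < L1 by rewrite /L1; have := sqr_ge0 p11; have := sqr_ge0 p12;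
  have := sqr_ge0 p22; lra.
set del := eps / L1.
have delp : 0 < del by rewrite divr_gt0.
have lin : 2*(p11*x+p12*y)*(k3*(-k1*x+y)) + 2*(p12*x+p22*y)*(-(k3*k2*x))
   <= - (k3 * qm) * (x^+2+y^+2).
  have := hQ x y; rewrite -(ler_pM2l k3p).
  move=> h; lra.
have c1 := young (p11*x+p12*y) d1 del delp.
have c2 := young (p12*x+p22*y) d2 del delp.
have s1 : (p11*x+p12*y)^+2 + (p12*x+p22*y)^+2 <= L1 * (x^+2+y^+2).
  have := sqr_ge0 (p11*y - p12*x); have := sqr_ge0 (p12*y - p22*x).
  have := sqr_ge0 x; have := sqr_ge0 y; rewrite /L1.
  move=> h1 h2 h3 h4; rewrite -subr_ge0.
  have -> : (p11 ^+ 2 + 2 * p12 ^+ 2 + p22 ^+ 2 + 1) * (x ^+ 2 + y ^+ 2) -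
    ((p11 * x + p12 * y) ^+ 2 + (p12 * x + p22 * y) ^+ 2) =
    (p11*y - p12*x)^+2 + (p12*y - p22*x)^+2 + (x^+2+y^+2) by ring.
  lra.
have s2 : del * ((p11*x+p12*y)^+2 + (p12*x+p22*y)^+2) <= eps * (x^+2+y^+2).
  apply: le_trans (ler_wpM2l (ltW delp) s1) _.
  by rewrite mulrA /del divfK ?gt_eqF.
have e3 : d1 ^+ 2 / del + d2 ^+ 2 / del = (L1 / eps) * (d1^+2+d2^+2).
  by rewrite /del; field; rewrite !gt_eqF.
have e4 : 2*(p11*x+p12*y)*(k3*(-k1*x+y)+d1) + 2*(p12*x+p22*y)*(-(k3*k2*x)+d2)
  = (2*(p11*x+p12*y)*(k3*(-k1*x+y)) + 2*(p12*x+p22*y)*(-(k3*k2*x)))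
    + 2*(p11*x+p12*y)*d1 + 2*(p12*x+p22*y)*d2 by ring.
rewrite e4 -/L1 -e3.
have e5 : -(k3*qm - eps)*(x^+2+y^+2) = - (k3 * qm) * (x^+2+y^+2) + eps * (x^+2+y^+2) by ring.
rewrite e5.
have e6 : del * ((p11*x+p12*y)^+2 + (p12*x+p22*y)^+2) =
  del * (p11*x+p12*y)^+2 + del * (p12*x+p22*y)^+2 by ring.
rewrite e6 in s2.
lra.
Qed.



Lemma dbound (k1 k2 k3 c1 c2 g1 g2 m e y w d1 d2 : R) :
  w = e + m ->
  d1 = k3 * (- k1 * (k3 * w + g1 * w) + y) - k3 * (- k1 * (k3 * e) + y) ->
  d2 = - k2 * (k3 ^+ 2 * w + c1 * g1 * w + c2 * g2 * w) + k3 * k2 * (k3 * e) ->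
  d1 ^+ 2 + d2 ^+ 2 <= (2 * (k1 ^+ 2 + k2 ^+ 2) * k3 ^+ 4) * m ^+ 2 +
     (2 * k1 ^+ 2 * k3 ^+ 2 + 4 * k2 ^+ 2 * c1 ^+ 2 + 4 * k2 ^+ 2 * c2 ^+ 2) *
     (g1 ^+ 2 + g2 ^+ 2) * w ^+ 2.
Proof.
move=> hw hd1 hd2.
set a1 := k1 * k3 ^+ 2 * m; set b1 := k1 * k3 * g1 * w.
set a2 := k2 * k3 ^+ 2 * m; set u := k2 * c1 * g1 * w; set v := k2 * c2 * g2 * w.
have e1 : d1 = - (a1 + b1) by rewrite hd1 /a1 /b1 hw; ring.
have e2 : d2 = - (a2 + u + v) by rewrite hd2 /a2 /u /v hw; ring.
rewrite e1 e2 !sqrrN.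
have h1 : (a1 + b1) ^+ 2 <= 2 * a1 ^+ 2 + 2 * b1 ^+ 2.
  rewrite -subr_ge0.
  have -> : 2 * a1 ^+ 2 + 2 * b1 ^+ 2 - (a1 + b1) ^+ 2 = (a1 - b1) ^+ 2 by ring.
  exact: sqr_ge0.
have h2 : (a2 + u + v) ^+ 2 <= 2 * a2 ^+ 2 + 4 * u ^+ 2 + 4 * v ^+ 2.
  have := sqr_ge0 (a2 - (u + v)); have := sqr_ge0 (u - v); move=> q1 q2.
  rewrite -subr_ge0.
  have -> : 2 * a2 ^+ 2 + 4 * u ^+ 2 + 4 * v ^+ 2 - (a2 + u + v) ^+ 2 =
    (a2 - (u + v)) ^+ 2 + 2 * (u - v) ^+ 2 by ring.
  lra.
have e3 : (2 * (k1 ^+ 2 + k2 ^+ 2) * k3 ^+ 4) * m ^+ 2 +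
     (2 * k1 ^+ 2 * k3 ^+ 2 + 4 * k2 ^+ 2 * c1 ^+ 2 + 4 * k2 ^+ 2 * c2 ^+ 2) *
     (g1 ^+ 2 + g2 ^+ 2) * w ^+ 2 =
   2 * a1 ^+ 2 + 2 * b1 ^+ 2 + 2 * a2 ^+ 2 + 4 * u ^+ 2 + 4 * v ^+ 2
   + (2 * (k1 * k3 * g2 * w) ^+ 2 + 4 * (k2 * c1 * g2 * w) ^+ 2
      + 4 * (k2 * c2 * g1 * w) ^+ 2) by rewrite /a1 /b1 /a2 /u /v; ring.
rewrite e3.
have := sqr_ge0 (k1 * k3 * g2 * w); have := sqr_ge0 (k2 * c1 * g2 * w);
have := sqr_ge0 (k2 * c2 * g1 * w).
lra.
Qed.

Lemma expo_facts (p : R) : 1 < p < 2 ->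
  [/\ 0 < expo p * 2 + 1 < 1, expo p * 2 + 1 != 0,
      0 < 2 * expo p * 2 + 1 < 1 & 2 * expo p * 2 + 1 != 0].
Proof.
move=> /andP[p1 p2].
have d0 : 0 < 3 * p - 2 by lra.
have ea : expo p * 2 + 1 = p / (3 * p - 2) by rewrite /expo; field; rewrite gt_eqF.
have eb : 2 * expo p * 2 + 1 = (2 - p) / (3 * p - 2) by rewrite /expo; field; rewrite gt_eqF.
have A : 0 < p / (3 * p - 2) < 1.
  apply/andP; split; first by rewrite divr_gt0 //; lra.
  by rewrite ltr_pdivrMr // mul1r; lra.
have B : 0 < (2 - p) / (3 * p - 2) < 1.
  apply/andP; split; first by rewrite divr_gt0 //; lra.
  by rewrite ltr_pdivrMr // mul1r; lra.
rewrite ea eb; split => //.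
  by case/andP: A => a _; rewrite gt_eqF.
by case/andP: B => a _; rewrite gt_eqF.
Qed.



Lemma gsq (s e : R) : 0 <= s -> e * 2 + 1 != 0 ->
  (s `^ e) ^+ 2 * s = s `^ (e * 2 + 1).
Proof.
move=> s0 ne.
rewrite -powR_mulrn ?powR_ge0 // -powRrM.
rewrite powRD; last by apply/implyP => h; rewrite (negbTE ne) in h.
by rewrite powRr1.
Qed.



Lemma arith (a Z X S Mu mb2 G M A1 A2 eta C k : R) :
  0 <= M -> 0 <= A1 -> 0 <= A2 -> 0 <= a -> 0 <= eta -> 0 <= Mu -> Mu <= mb2 ->
  G * S <= 2 * eta * S + C -> S <= 2 * X + 2 * Mu -> k * X <= Z ->
  M * A2 * 4 * eta <= a * k -> 0 <= X ->
  - a * Z + M * A1 * Mu + M * A2 * (G * S) <= M * A1 * mb2 + M * A2 * (4 * eta * mb2 + C).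
Proof.
move=> M0 A10 A20 a0 e0 Mu0 Mub GS SX kX cond X0.
have MA2 : 0 <= M * A2 by rewrite mulr_ge0.
have h1 : M * A2 * (G * S) <= M * A2 * (2 * eta * S + C) by rewrite ler_wpM2l.
have h2 : 2 * eta * S <= 2 * eta * (2 * X + 2 * Mu) by rewrite ler_wpM2l // mulr_ge0.
have h3 : M * A2 * (2 * eta * (2 * X + 2 * Mu)) = (M * A2 * 4 * eta) * X + M * A2 * (4 * eta * Mu) by ring.
have h4 : (M * A2 * 4 * eta) * X <= (a * k) * X by rewrite ler_wpM2r.
have h5 : a * (k * X) <= a * Z by rewrite ler_wpM2l.
have h6 : M * A2 * (4 * eta * Mu) <= M * A2 * (4 * eta * mb2)
  by rewrite ler_wpM2l // ler_wpM2l // mulr_ge0.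
have h7 : M * A1 * Mu <= M * A1 * mb2 by rewrite ler_wpM2l // mulr_ge0.
have h8 : M * A2 * (2 * eta * S + C) <= M * A2 * (2 * eta * (2 * X + 2 * Mu) + C)
  by rewrite ler_wpM2l // lerD2r.
have e1 : M * A2 * (2 * eta * (2 * X + 2 * Mu) + C) =
   (M * A2 * 4 * eta) * X + M * A2 * (4 * eta * Mu) + M * A2 * C by ring.
have e2 : M * A2 * (4 * eta * mb2 + C) = M * A2 * (4 * eta * mb2) + M * A2 * C by ring.
have e3 : a * k * X = a * (k * X) by ring.
rewrite e2; rewrite e1 in h8; rewrite e3 in h4.
have e4 : - a * Z = - (a * Z) by ring.
rewrite e4.
lra.
Qed.

Lemma Vi_le (p11 p12 p22 x y : R) :
  p11 * x ^+ 2 + 2 * p12 * x * y + p22 * y ^+ 2 <=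
  (`|p11| + `|p12| + `|p22|) * (x ^+ 2 + y ^+ 2).
Proof.
have h1 : p11 * x ^+ 2 <= `|p11| * x ^+ 2 by rewrite ler_wpM2r ?sqr_ge0 ?ler_norm.
have h3 : p22 * y ^+ 2 <= `|p22| * y ^+ 2 by rewrite ler_wpM2r ?sqr_ge0 ?ler_norm.
have h2 : 2 * p12 * x * y <= `|p12| * (x ^+ 2 + y ^+ 2).
  have b : `|2 * x * y| <= x ^+ 2 + y ^+ 2.
    rewrite ler_norml; have := sqr_ge0 (x - y); have := sqr_ge0 (x + y).
    move=> h1' h2'; apply/andP; split; nra.
  have -> : 2 * p12 * x * y = p12 * (2 * x * y) by ring.
  apply: le_trans (ler_norm _) _; rewrite normrM.
  by apply: ler_wpM2l => //; exact: normr_ge0.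
move: h1 h2 h3; set a1 := `|p11|; set a2 := `|p12|; set a3 := `|p22| => h1 h2 h3.
have e : (a1 + a2 + a3) * (x ^+ 2 + y ^+ 2) =
  a1 * x ^+ 2 + a2 * (x ^+ 2 + y ^+ 2) + a3 * y ^+ 2 + (a1 * y ^+ 2 + a3 * x ^+ 2) by ring.
have h4 : 0 <= a1 * y ^+ 2 + a3 * x ^+ 2 by rewrite addr_ge0 // mulr_ge0 ?sqr_ge0 // ?normr_ge0.
rewrite e; lra.
Qed.

End Helpers.



Section Static.
Variable R : realType.

Lemma sqnormE n (v : 'rV[R]_n) : sqnorm v = \sum_(i < n) v 0 i ^+ 2.
Proof. by rewrite /sqnorm !mxE; apply: eq_bigr => i _; rewrite mxE expr2. Qed.

Lemma sqnorm_ge0 n (v : 'rV[R]_n) : 0 <= sqnorm v.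
Proof. by rewrite sqnormE sumr_ge0 // => i _; rewrite sqr_ge0. Qed.

Definition Vf {n} (k3 p11 p12 p22 : R) (e1 e2 : 'rV[R]_n) : R :=
  \sum_(i < n) (p11 * (k3 * e1 0 i) ^+ 2 + 2 * p12 * (k3 * e1 0 i) * e2 0 i
                + p22 * e2 0 i ^+ 2).

Definition Df {n} (k3 p11 p12 p22 : R) (e1 e2 de1 de2 : 'rV[R]_n) : R :=
  \sum_(i < n) (2 * (p11 * (k3 * e1 0 i) + p12 * e2 0 i) * (k3 * de1 0 i)
              + 2 * (p12 * (k3 * e1 0 i) + p22 * e2 0 i) * de2 0 i).

Lemma static n (k1 k2 k3 p mb2 p11 p12 p22 qm : R) :
  0 < k1 -> 0 < k2 -> 0 < k3 -> 1 < p < 2 -> 0 < qm ->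
  (forall x y : R, qm * (x ^+ 2 + y ^+ 2) <= (2 * k1 * p11 + 2 * k2 * p12) * x ^+ 2
      + 2 * (k1 * p12 + k2 * p22 - p11) * x * y + (-2 * p12) * y ^+ 2) ->
  exists c K : R, 0 < c /\ forall e1 e2 mu : 'rV[R]_n, sqnorm mu <= mb2 ->
    Df k3 p11 p12 p22 e1 e2 (- k1 *: phi1 k3 p (e1 + mu) + e2)
       (- k2 *: phi2 k3 p (e1 + mu)) + c * Vf k3 p11 p12 p22 e1 e2 <= K.
Proof.
move=> k1p k2p k3p hp qmp hQ.
have [hb1 hn1 hb2 hn2] := expo_facts _ hp.
set eps := k3 * qm / 2.
have epsp : 0 < eps by rewrite divr_gt0 // mulr_gt0.
set M := (p11 ^+ 2 + 2 * p12 ^+ 2 + p22 ^+ 2 + 1) / eps.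
have Mp : 0 < M.
  rewrite divr_gt0 //; have := sqr_ge0 p11; have := sqr_ge0 p12;
  have := sqr_ge0 p22; lra.
set c1 := 2 * k3 * (2 * p - 1) / (3 * p - 2).
set c2 := p / (3 * p - 2).
set A1 := 2 * (k1 ^+ 2 + k2 ^+ 2) * k3 ^+ 4.
set A2 := 2 * k1 ^+ 2 * k3 ^+ 2 + 4 * k2 ^+ 2 * c1 ^+ 2 + 4 * k2 ^+ 2 * c2 ^+ 2.
have A10 : 0 <= A1.
  rewrite /A1 mulr_ge0 //; last by rewrite exprn_ge0 // ltW.
  by rewrite mulr_ge0 // addr_ge0 // sqr_ge0.
have A20 : 0 <= A2.
  rewrite /A2; have h1 := sqr_ge0 k1; have h2 := sqr_ge0 k2; have h3 := sqr_ge0 k3; have h4 := sqr_ge0 c1; have h5 := sqr_ge0 c2.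
  have := mulr_ge0 h1 h3; have := mulr_ge0 h2 h4; have := mulr_ge0 h2 h5. lra.
set Pm := `|p11| + `|p12| + `|p22| + 1.
have Pmp : 0 < Pm by rewrite /Pm ltr_wpDl // !addr_ge0.
set eta := k3 ^+ 3 * qm / (16 * M * (A2 + 1)).
have etap : 0 < eta.
  apply: divr_gt0; first by rewrite mulr_gt0 // exprn_gt0.
  by apply: mulr_gt0; [apply: mulr_gt0 => //|lra].
have [C1 hC1] := sublin _ _ hb1 etap.
have [C2 hC2] := sublin _ _ hb2 etap.
set c := k3 * qm / (4 * Pm).
have cp : 0 < c by rewrite divr_gt0 ?mulr_gt0.
exists c, (M * A1 * mb2 + M * A2 * (4 * eta * mb2 + (C1 + C2))).
split => // e1 e2 mu hmu.
set w := e1 + mu. set s := sqnorm w.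
set g1 := s `^ expo p. set g2 := s `^ (2 * expo p).
set de1 := - k1 *: phi1 k3 p w + e2.
set de2 := - k2 *: phi2 k3 p w.
have hi : forall i : 'I_n,
  2 * (p11 * (k3 * e1 0 i) + p12 * e2 0 i) * (k3 * de1 0 i)
   + 2 * (p12 * (k3 * e1 0 i) + p22 * e2 0 i) * de2 0 i
   + c * (p11 * (k3 * e1 0 i) ^+ 2 + 2 * p12 * (k3 * e1 0 i) * e2 0 i
                + p22 * e2 0 i ^+ 2)
  <= - (k3 * qm / 4) * ((k3 * e1 0 i) ^+ 2 + e2 0 i ^+ 2)
     + M * (A1 * mu 0 i ^+ 2 + A2 * (g1 ^+ 2 + g2 ^+ 2) * w 0 i ^+ 2).
  move=> i.
  set x := k3 * e1 0 i; set y := e2 0 i.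
  set d1 := k3 * de1 0 i - k3 * (- k1 * x + y).
  set d2 := de2 0 i + k3 * k2 * x.
  have hc := coord_bnd _ _ _ _ _ _ _ _ x y d1 d2 hQ k3p epsp.
  have weq : w 0 i = e1 0 i + mu 0 i by rewrite mxE.
  have d1eq : d1 = k3 * (- k1 * (k3 * w 0 i + g1 * w 0 i) + y)
                   - k3 * (- k1 * (k3 * e1 0 i) + y).
    by rewrite /d1 /de1 /phi1 /x !mxE.
  have d2eq : d2 = - k2 * (k3 ^+ 2 * w 0 i + c1 * g1 * w 0 i + c2 * g2 * w 0 i)
                   + k3 * k2 * (k3 * e1 0 i).
    by rewrite /d2 /de2 /phi2 /x !mxE.
  have hd := dbound _ _ _ _ _ _ _ _ _ _ _ _ _ weq d1eq d2eq.
  have hv := Vi_le p11 p12 p22 x y.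
  rewrite -/M in hc.
  have e : 2 * (p11 * x + p12 * y) * (k3 * de1 0 i) + 2 * (p12 * x + p22 * y) * de2 0 i
     = 2 * (p11 * x + p12 * y) * (k3 * (- k1 * x + y) + d1)
       + 2 * (p12 * x + p22 * y) * (- (k3 * k2 * x) + d2) by rewrite /d1 /d2; ring.
  rewrite e.
  have Z0 : 0 <= x ^+ 2 + y ^+ 2 by rewrite addr_ge0 ?sqr_ge0.
  have cV : c * (p11 * x ^+ 2 + 2 * p12 * x * y + p22 * y ^+ 2)
            <= (k3 * qm / 4) * (x ^+ 2 + y ^+ 2).
    apply: le_trans (ler_wpM2l (ltW cp) hv) _.
    have -> : k3 * qm / 4 = c * Pm by rewrite /c; field; rewrite !gt_eqF //.
    rewrite -mulrA; apply: ler_wpM2l; first exact: ltW.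
    by apply: ler_wpM2r => //; rewrite /Pm lerDl ler01.
  have Md : M * (d1 ^+ 2 + d2 ^+ 2) <=
     M * (A1 * mu 0 i ^+ 2 + A2 * (g1 ^+ 2 + g2 ^+ 2) * w 0 i ^+ 2).
    by apply: ler_wpM2l; [exact: ltW | exact: hd].
  have ee : - (k3 * qm - eps) * (x ^+ 2 + y ^+ 2) + (k3 * qm / 4) * (x ^+ 2 + y ^+ 2)
     = - (k3 * qm / 4) * (x ^+ 2 + y ^+ 2) by rewrite /eps; field.
  lra.
have sum1 : Df k3 p11 p12 p22 e1 e2 de1 de2 + c * Vf k3 p11 p12 p22 e1 e2 =
  \sum_(i < n) (2 * (p11 * (k3 * e1 0 i) + p12 * e2 0 i) * (k3 * de1 0 i)
   + 2 * (p12 * (k3 * e1 0 i) + p22 * e2 0 i) * de2 0 i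
   + c * (p11 * (k3 * e1 0 i) ^+ 2 + 2 * p12 * (k3 * e1 0 i) * e2 0 i
                + p22 * e2 0 i ^+ 2)).
  by rewrite /Df /Vf mulr_sumr -big_split.
rewrite sum1; apply: le_trans (ler_sum _ (fun i _ => hi i)) _.
set Z := \sum_(i < n) ((k3 * e1 0 i) ^+ 2 + e2 0 i ^+ 2).
set X := \sum_(i < n) e1 0 i ^+ 2.
set Mu := \sum_(i < n) mu 0 i ^+ 2.
set S := \sum_(i < n) w 0 i ^+ 2.
set G := g1 ^+ 2 + g2 ^+ 2.
have sum2 : \sum_(i < n) (- (k3 * qm / 4) * ((k3 * e1 0 i) ^+ 2 + e2 0 i ^+ 2)
     + M * (A1 * mu 0 i ^+ 2 + A2 * G * w 0 i ^+ 2))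
   = - (k3 * qm / 4) * Z + M * A1 * Mu + M * A2 * (G * S).
  by rewrite /Z /Mu /S !mulr_sumr -!big_split; apply: eq_bigr => i _ /=; ring.
rewrite sum2.
have sS : s = S by rewrite /s sqnormE.
have S0 : 0 <= S by rewrite -sS sqnorm_ge0.
have Mu0 : 0 <= Mu by rewrite sumr_ge0 // => i _; rewrite sqr_ge0.
have X0 : 0 <= X by rewrite sumr_ge0 // => i _; rewrite sqr_ge0.
have Mub : Mu <= mb2 by rewrite /Mu -sqnormE.
have GS : G * S <= 2 * eta * S + (C1 + C2).
  rewrite -sS /G mulrDl /g1 /g2 !gsq // ?sqnorm_ge0 //.
  have := hC1 s (@sqnorm_ge0 _ w); have := hC2 s (@sqnorm_ge0 _ w); lra.
have SX : S <= 2 * X + 2 * Mu.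
  rewrite /S /X /Mu !mulr_sumr -big_split; apply: ler_sum => i _.
  rewrite mxE /= -subr_ge0.
  have -> : 2 * e1 0 i ^+ 2 + 2 * mu 0 i ^+ 2 - (e1 0 i + mu 0 i) ^+ 2
    = (e1 0 i - mu 0 i) ^+ 2 by ring.
  exact: sqr_ge0.
have kX : k3 ^+ 2 * X <= Z.
  rewrite /X /Z mulr_sumr; apply: ler_sum => i _.
  rewrite exprMn lerDl; exact: sqr_ge0.
have cond : M * A2 * 4 * eta <= (k3 * qm / 4) * k3 ^+ 2.
  have -> : (k3 * qm / 4) * k3 ^+ 2 = M * (A2 + 1) * 4 * eta.
    rewrite /eta; field; rewrite !gt_eqF //; lra.
  apply: ler_wpM2r; first exact: ltW.
  apply: ler_wpM2r => //; apply: ler_wpM2l; first exact: ltW.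
  by rewrite lerDl ler01.
apply: (@arith R (k3 * qm / 4) Z X S Mu mb2 G M A1 A2 eta (C1 + C2) (k3 ^+ 2)) => //.
- exact: ltW.
- by rewrite divr_ge0 ?mulr_ge0 // ltW.
- exact: ltW.
Qed.

End Static.



Section Dyn.
Variable R : realType.

Lemma dyn (V dV : R -> R) (c K : R) : 0 < c ->
  (forall t : R, 0 < t -> is_derive t 1 V (dV t)) ->
  (forall t : R, 0 < t -> dV t + c * V t <= K) ->
  exists T : R, 0 <= T /\ forall t : R, T <= t -> V t <= K / c + 1.
Proof.
move=> cp hd hs.
set g := fun u : R => c * u.
set W := (V - cst (K / c)) * (expR \o g).
have hg : forall s : R, is_derive s 1 g c.
  move=> s; have := @is_deriveZ R R R id c s 1 1 (is_derive_id s (1:R)).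
  by rewrite /g => h; apply: is_derive_eq h _; rewrite /GRing.scale /= mulr1.
have dW : forall s : R, 0 < s -> is_derive s 1 W
    (expR (c * s) * (dV s + c * V s - K)).
  move=> s sp.
  have he : is_derive s 1 (expR \o g) (expR (g s) * c).
    by apply: is_derive1_comp.
  have hv : is_derive s 1 (V - cst (K / c)) (dV s - 0).
    by apply: is_deriveB => //; exact: hd.
  have := is_deriveM hv he.
  move=> h; apply: is_derive_eq h _.
  have -> : (V - cst (K / c)) s = V s - K / c by [].
  rewrite /g /= /GRing.scale /=; field; by rewrite gt_eqF.
have hder : forall x : R, x \in `]1, +oo[%R -> is_derive x 1 W (expR (c * x) * (dV x + c * V x - K)).
  move=> x; rewrite in_itv /= andbT => h; apply: dW; exact: lt_trans ltr01 h.
have Wle : forall t : R, 1 <= t -> W t <= W 1.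
  move=> t t1; rewrite -subr_le0.
  have hdv : {in `[1, t]%R, forall x, derivable W x 1}.
    move=> y; rewrite in_itv /= => /andP[h _].
    have x0 : 0 < y by apply: lt_le_trans h.
    by case: (dW y x0).
  have hcont := derivable_within_continuous hdv.
  have hder' : forall x : R, x \in `]1, t[%R -> is_derive x 1 W (expR (c * x) * (dV x + c * V x - K)).
    move=> x; rewrite !in_itv /= => /andP[h _]; apply: hder; by rewrite in_itv /= h.
  have [x xin ->] := MVT_segment t1 hder' hcont.
  apply: mulr_le0_ge0; last by rewrite subr_ge0.
  apply: mulr_ge0_le0; first exact: ltW (expR_gt0 _).
  have x0 : 0 < x by move: xin; rewrite in_itv /= => /andP[h _]; apply: lt_le_trans h.
  by have := hs x x0; lra.
set D := `|V 1 - K / c| * expR c.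
have D0 : 0 <= D by rewrite mulr_ge0 // ltW // expR_gt0.
have Dc0 : 0 <= D / c by rewrite divr_ge0 // ltW.
exists (1 + D / c); split; first lra.
move=> t tT.
have t1 : 1 <= t by lra.
have := Wle t t1.
have -> : W t = (V t - K / c) * expR (c * t) by [].
have -> : W 1 = (V 1 - K / c) * expR (c * 1) by [].
rewrite mulr1 => hW.
have hW1 : (V 1 - K / c) * expR c <= D.
  by rewrite /D ler_wpM2r ?ler_norm // ltW // expR_gt0.
have ct : D <= c * t.
  have : c * (1 + D / c) <= c * t by rewrite ler_wpM2l // ltW.
  have -> : c * (1 + D / c) = c + D by field; rewrite gt_eqF.
  lra.
have hE := expR_ge1Dx (c * t).
have Ep := expR_gt0 (c * t).
have : (V t - K / c) * expR (c * t) <= 1 * expR (c * t) by lra.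
rewrite ler_pM2r // => h; lra.
Qed.

End Dyn.



Lemma lyap_entries (R : realType) (k1 k2 : R) (P Q : 'M[R]_2) : P 1 0 = P 0 1 ->
  (Astar k1 k2)^T *m P + P *m Astar k1 k2 = - Q ->
  [/\ Q 0 0 = 2 * k1 * P 0 0 + 2 * k2 * P 0 1,
      Q 0 1 = k1 * P 0 1 + k2 * P 1 1 - P 0 0 &
      Q 1 1 = -2 * P 0 1].
Proof.
move=> hs heq.
have qe i j : Q i j = - ((Astar k1 k2)^T *m P + P *m Astar k1 k2) i j.
  by rewrite heq mxE opprK.
have e0 : widen_ord (m:=2) (leqnSn 1) ord_max = 0 by exact/val_inj.
have e1 : (ord_max : 'I_2) = 1 by exact/val_inj.
split.
- rewrite qe !mxE !big_ord_recr !big_ord0 /= !mxE e0 e1 /= ?hs; ring.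
- rewrite qe !mxE !big_ord_recr !big_ord0 /= !mxE e0 e1 /= ?hs; ring.
- rewrite qe !mxE !big_ord_recr !big_ord0 /= !mxE e0 e1 /= ?hs; ring.
Qed.

Theorem corollary2 (R : realType) (n : nat) (p k1 k2 k3 mubar : R)
    (Q P : 'M[R]_2) (lminQ lmaxP lminP : R) :
  (1 <= n)%N -> 1 < p < 2 -> 0 < k3 -> 0 < k1 -> 0 < k2 ->
  hurwitz (Astar k1 k2) ->
  posdef Q -> posdef P ->
  (Astar k1 k2)^T *m P + P *m Astar k1 k2 = - Q ->
  is_lambda_min Q lminQ -> is_lambda_max P lmaxP -> is_lambda_min P lminP ->
  lmaxP / lminP <= k3 * lminQ / lmaxP ->
  PFTS n k1 k2 k3 p mubar.
Proof.
move=> _ hp k3p k1p k2p _ hQd hPd heq _ _ _ _.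
have [hsP [pm [pmp hpm]]] := posdef2 _ hPd.
have [_ [qm [qmp hqm]]] := posdef2 _ hQd.
have [q00 q01 q11] := lyap_entries _ _ _ _ _ hsP heq.
set p11 := P 0 0; set p12 := P 0 1; set p22 := P 1 1.
have hQ : forall x y : R, qm * (x ^+ 2 + y ^+ 2) <= (2 * k1 * p11 + 2 * k2 * p12) * x ^+ 2
      + 2 * (k1 * p12 + k2 * p22 - p11) * x * y + (-2 * p12) * y ^+ 2.
  by move=> x y; rewrite -q00 -q01 -q11; exact: hqm.
have [c [K [cp hst]]] := @static R n k1 k2 k3 p (mubar ^+ 2) p11 p12 p22 qm k1p k2p k3p hp qmp hQ.
set mk := k3 ^+ 2 / (k3 ^+ 2 + 1).
have mkp : 0 < mk by rewrite divr_gt0 ?exprn_gt0 // ltr_wpDl ?sqr_ge0.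
set B := (K / c + 1) / (pm * mk).
exists (1 + `|B|); split; first by rewrite ltr_wpDr ?normr_ge0.
move=> mu hmu e1 e2 hsol.
set V := fun s => Vf R k3 p11 p12 p22 (e1 s) (e2 s).
set dV := fun t => Df R k3 p11 p12 p22 (e1 t) (e2 t)
   (- k1 *: phi1 k3 p (e1 t + mu t) + e2 t) (- k2 *: phi2 k3 p (e1 t + mu t)).
have hd : forall t : R, 0 < t -> is_derive t 1 V (dV t).
  move=> t tp.
  have hsl := hsol t tp.
  set F := fun (i : 'I_n) (s : R) => p11 * (k3 * e1 s 0 i) ^+ 2
     + 2 * p12 * (k3 * e1 s 0 i) * e2 s 0 i + p22 * e2 s 0 i ^+ 2.
  have -> : V = \sum_(i < n) F i.
    by apply/funext => s; rewrite fct_sumE.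
  rewrite /dV /Df.
  apply: is_derive_sum => i.
  have [ha hb] := hsl i.
  set a := (fun s => e1 s 0 i) in ha.
  set b := (fun s => e2 s 0 i) in hb.
  have -> : F i = (p11 * k3 ^+ 2) *: (a * a) + (2 * p12 * k3) *: (a * b) + p22 *: (b * b).
    apply/funext => s; rewrite /F /a /b !fctE /= /GRing.scale /=; ring.
  have := is_deriveD (is_deriveD (is_deriveZ (p11 * k3 ^+ 2) (is_deriveM ha ha))
     (is_deriveZ (2 * p12 * k3) (is_deriveM ha hb))) (is_deriveZ p22 (is_deriveM hb hb)).
  move=> h; apply: is_derive_eq h _.
  rewrite /a /b /=.
  set A1 := (- k1 *: phi1 k3 p (e1 t + mu t) + e2 t) 0 i.
  set B1 := (- k2 *: phi2 k3 p (e1 t + mu t)) 0 i.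
  rewrite /GRing.scale /=; ring.
have hs : forall t : R, 0 < t -> dV t + c * V t <= K.
  move=> t tp; apply: hst.
  have := hmu t (ltW tp); rewrite /enorm => h.
  have s0 := @sqnorm_ge0 R n (mu t).
  rewrite -(sqr_sqrtr s0).
  have q0 := sqrtr_ge0 (sqnorm (mu t)).
  by rewrite ler_pXn2r // ?nnegrE // (le_trans q0 h).
have [T [T0 hT]] := @dyn R V dV c K cp hd hs.
exists T; split => // t tT.
have hVt := hT t tT.
have mk1 : mk <= 1 by rewrite /mk ler_pdivrMr ?mul1r ?lerDl ?ltr_wpDl ?sqr_ge0.
have mk2 : mk <= k3 ^+ 2.
  rewrite /mk ler_pdivrMr ?ltr_wpDl ?sqr_ge0 // mulrDr mulr1 lerDr.
  by rewrite mulr_ge0 ?sqr_ge0.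
have low : pm * mk * (sqnorm (e1 t) + sqnorm (e2 t)) <= V t.
  rewrite /V /Vf !sqnormE -big_split mulr_sumr; apply: ler_sum => i _ /=.
  apply: le_trans (hpm (k3 * e1 t 0 i) (e2 t 0 i)).
  rewrite -mulrA; apply: ler_wpM2l; first exact: ltW.
  rewrite exprMn mulrDr; apply: lerD.
    by apply: ler_wpM2r; rewrite ?sqr_ge0.
  by rewrite -[X in _ <= X]mul1r; apply: ler_wpM2r; rewrite ?sqr_ge0.
have pmk : 0 < pm * mk by rewrite mulr_gt0.
have SB : sqnorm (e1 t) + sqnorm (e2 t) <= B.
  rewrite /B ler_pdivlMr // mulrC; exact: le_trans low hVt.
rewrite /state_norm.
set S := sqnorm (e1 t) + sqnorm (e2 t).
have S0 : 0 <= S by rewrite addr_ge0 // sqnorm_ge0.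
have sq := sqr_sqrtr S0.
have q0 := sqrtr_ge0 S.
have hB := ler_norm B.
have : Num.sqrt S <= 1 + Num.sqrt S ^+ 2.
  have := sqr_ge0 (Num.sqrt S - 1); rewrite -subr_ge0; nra.
rewrite sq => h; move: SB; rewrite -/S => SB; lra.
Qed.
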